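(* Let $k,r\geq 1$, let $1\le a\le b\le k$, let $1\le d\le r$, and let $I_d\subseteq\{1,\dots,r\}$ with $|I_d|=d$. Then for every $n\geq k$, $$\Bigl|S_n^{(r)}\Bigl(\bigcup_{m=a}^{b}T_{k,r}^m(I_d)\Bigr)\Bigr|=(k-1)!\,r^{k-1}\prod_{j=k}^n\bigl(d(k+a-b-1)+j(r-d)\bigr).$$
   Context: For $n,r\ge1$, $S_n^{(r)}$ denotes the set of coloured permutations of length $n$ with $r$ colours: sequences $\phi=(\phi_1,\dots,\phi_n)$ where $\phi_i=a_i^{(c_i)}$, $(a_1,\dots,a_n)$ is a permutation of $\{1,\dots,n\}$ and each $c_i\in\{1,\dots,r\}$ is the colour of $a_i$. For $\phi=(\tau_1^{(s_1)},\dots,\tau_k^{(s_k)})\in S_k^{(r)}$ and $\psi=(\alpha_1^{(v_1)},\dots,\alpha_n^{(v_n)})\in S_n^{(r)}$, an occurrence of $\phi$ in $\psi$ is a sequence of indices $1\le i_1<\dots<i_k\le n$ such that $(\alpha_{i_1},\dots,\alpha_{i_k})$ is order-isomorphic to $(\tau_1,\dots,\tau_k)$ and $v_{i_j}=s_j$ for all $j$. $\psi$ contains $\phi$ if there is at least one occurrence, and avoids $\phi$ otherwise. For a set $T$ of coloured patterns, $S_n^{(r)}(T)$ is the set of $\psi\in S_n^{(r)}$ avoiding every $\phi\in T$. For $I_d\subseteq\{1,\dots,r\}$ with $|I_d|=d$ and $1\le m\le k$, $T_{k,r}^m(I_d)$ is the set of all $\phi\in S_k^{(r)}$ whose first entry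 is $\phi_1=m^{(c)}$ for some colour $c\in I_d$. *)

(* Defs.v *)
From mathcomp Require Import all_boot all_fingroup.
Set Implicit Arguments. Unset Strict Implicit. Unset Printing Implicit Defensive.

(* A coloured permutation of length n with r colours, 0-indexed:
   positions are 'I_n, the underlying permutation p maps position i to the
   value a_{i+1} - 1, and c i : 'I_r is the colour minus 1. *)
Definition cperm (n r : nat) : finType := ({perm 'I_n} * {ffun 'I_n -> 'I_r})%type.

Definition occurrence (k n r : nat) (phi : cperm k r) (psi : cperm n r)
  (f : {ffun 'I_k -> 'I_n}) : bool :=
  [forall j : 'I_k, forall j' : 'I_k, (j < j') ==> (f j < f j')] &&
  [forall j : 'I_k, forall j' : 'I_k,
     (psi.1 (f j) < psi.1 (f j')) == (phi.1 j < phi.1 j')] &&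
  [forall j : 'I_k, psi.2 (f j) == phi.2 j].

Definition contains (k n r : nat) (phi : cperm k r) (psi : cperm n r) : bool :=
  [exists f : {ffun 'I_k -> 'I_n}, occurrence phi psi f].

Definition avoiders (k n r : nat) (T : pred (cperm k r)) : {set cperm n r} :=
  [set psi : cperm n r | [forall phi : cperm k r, T phi ==> ~~ contains phi psi]].

(* T_{k,r}^m(I): first entry is m^{(c)} with c in I (1-indexed m, colour). *)
Definition inT (k r m : nat) (I : {set 'I_r}) (phi : cperm k r) : bool :=
  [exists i : 'I_k, [&& val i == 0, (val (phi.1 i)).+1 == m & phi.2 i \in I]].

Definition inTunion (k r a b : nat) (I : {set 'I_r}) (phi : cperm k r) : bool :=
  [exists m : 'I_b.+1, (a <= m) && inT m I phi].

(* Main.v *)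
Require Import Defs.
From mathcomp Require Import all_boot all_order all_fingroup zify.
Set Implicit Arguments. Unset Strict Implicit. Unset Printing Implicit Defensive.

Lemma card_ord_pred N (P : pred nat) : #|[set y : 'I_N | P y]| = count P (iota 0 N).
Proof.
rewrite cardE /enum_mem size_filter -val_enum_ord count_map -enumT.
by apply: eq_count => y; rewrite /= inE.
Qed.

Lemma count_window lo len N : lo + len <= N ->
  count (fun y => lo <= y < lo + len) (iota 0 N) = len.
Proof.
move=> H.
have -> : N = lo + (len + (N - lo - len)) by lia.
rewrite !iotaD !count_cat add0n.
rewrite (@eq_in_count _ _ pred0); last by move=> y; rewrite mem_iota /= => Hy; lia.
rewrite (@eq_in_count _ _ predT (iota lo len)); last by move=> y; rewrite mem_iota /= => Hy; lia.
rewrite (@eq_in_count _ _ pred0 (iota (lo+len) _)); last by move=> y; rewrite mem_iota /= => Hy; lia.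
by rewrite !count_pred0 count_predT size_iota add0n addn0.
Qed.

Lemma card_window N lo len : lo + len <= N ->
  #|[set y : 'I_N | lo <= y < lo + len]| = len.
Proof. by move=> H; rewrite (card_ord_pred N (fun y => lo <= y < lo + len)) count_window. Qed.

Lemma card_perm_window k (s : {perm 'I_k}) lo len : lo + len <= k ->
  #|[set j | lo <= s j < lo + len]| = len.
Proof.
move=> H.
have -> : [set j | lo <= s j < lo + len] = s @^-1: [set y : 'I_k | lo <= y < lo + len].
  by apply/setP => j; rewrite !inE.
by rewrite card_preimset ?card_window //; apply: perm_inj.
Qed.

Lemma image_window k N (g : 'I_k -> 'I_N) (s : {perm 'I_k}) lo len lo' len' :
  injective g -> lo + len <= k -> lo' + len' <= N ->
  (forall j, lo <= s j < lo + len -> lo' <= g j < lo' + len') -> len <= len'.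
Proof.
move=> ginj H1 H2 H.
rewrite -{1}(card_perm_window s H1) -(card_imset _ ginj) -(card_window H2).
apply: subset_leq_card; apply/subsetP => y /imsetP [j]; rewrite !inE => Hj ->.
exact: H.
Qed.

Lemma count_below N k (g : 'I_k -> 'I_N) (s : {perm 'I_k}) i0 :
  injective g -> (forall j, (g j < g i0) = (s j < s i0)) -> s i0 <= g i0.
Proof.
move=> ginj H.
apply: (@image_window k N g s 0 (s i0) 0 (g i0) ginj); rewrite ?add0n.
- exact: ltnW.
- exact: ltnW.
- by move=> j /= Hj; rewrite H.
Qed.

Lemma count_above N k (g : 'I_k -> 'I_N) (s : {perm 'I_k}) i0 :
  injective g -> (forall j, (g i0 < g j) = (s i0 < s j)) -> k - s i0 <= N - g i0.
Proof.
move=> ginj H.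
have h1 := ltn_ord (s i0); have h2 := ltn_ord (g i0).
have := (@image_window k N g s (s i0).+1 (k - (s i0).+1) (g i0).+1 (N - (g i0).+1) ginj).
have e1 : (s i0).+1 + (k - (s i0).+1) <= k by lia.
have e2 : (g i0).+1 + (N - (g i0).+1) <= N by lia.
move=> /(_ e1 e2) Hc.
have : k - (s i0).+1 <= N - (g i0).+1.
  apply: Hc => j /andP [Hj1 Hj2]; apply/andP; split.
  - by rewrite H.
  - have := ltn_ord (g j); lia.
lia.
Qed.

Definition Fmap n r (x : 'I_n.+1 * 'I_r * cperm n r) : cperm n.+1 r :=
  (lift_perm ord0 x.1.1 x.2.1,
   [ffun i => if unlift ord0 i is Some j then x.2.2 j else x.1.2]).

Lemma Fmap_inj n r : injective (@Fmap n r).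
Proof.
move=> [[v c0] [q c]] [[v' c0'] [q' c']] [Hp Hc].
have ev : v = v' by rewrite -(lift_perm_id ord0 v q) Hp lift_perm_id.
subst v'.
have ec0 : c0 = c0'.
  by move/ffunP: Hc => /(_ ord0); rewrite !ffunE unlift_none.
have eq : q = q'.
  apply/permP => i; apply: (@lift_inj _ v).
  by rewrite -(lift_perm_lift ord0 v q) -(lift_perm_lift ord0 v q') Hp.
have ec : c = c'.
  by apply/ffunP => i; move/ffunP: Hc => /(_ (lift ord0 i)); rewrite !ffunE liftK.
by subst.
Qed.

Lemma qf_spec n (p : {perm 'I_n.+1}) (i : 'I_n) :
  lift (p ord0) (odflt i (unlift (p ord0) (p (lift ord0 i)))) = p (lift ord0 i).
Proof.
case: unliftP => [j -> //|] /= /perm_inj E.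
by move: (neq_lift ord0 i); rewrite E eqxx.
Qed.

Lemma Fmap_onto n r (psi : cperm n.+1 r) : exists x, psi = @Fmap n r x.
Proof.
case: psi => p c.
pose qf i := odflt i (unlift (p ord0) (p (lift ord0 i))).
have qinj : injective qf.
  move=> i j E; have := qf_spec p i; rewrite -/(qf i) E qf_spec.
  by move/perm_inj/lift_inj.
exists (p ord0, c ord0, (perm qinj, [ffun i => c (lift ord0 i)])).
rewrite /Fmap /=; congr pair.
  apply/permP => i; case: (unliftP ord0 i) => [j ->|->].
    by rewrite lift_perm_lift permE qf_spec.
  by rewrite lift_perm_id.
apply/ffunP => i; rewrite ffunE; case: (unliftP ord0 i) => [j ->|->] //.
by rewrite ffunE.
Qed.

Lemma occ_lift k n r (phi : cperm k r) (x : 'I_n.+1 * 'I_r * cperm n r)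
  (g : {ffun 'I_k -> 'I_n}) :
  occurrence phi (Fmap x) [ffun j => lift ord0 (g j)] = occurrence phi x.2 g.
Proof.
rewrite /occurrence; congr (_ && _ && _).
- by apply: eq_forallb => j; apply: eq_forallb => j'; rewrite !ffunE !lift0 ltnS.
- apply: eq_forallb => j; apply: eq_forallb => j'.
  by rewrite !ffunE /Fmap /= !lift_perm_lift /= !ltnNge leq_bump2.
- by apply: eq_forallb => j; rewrite !ffunE liftK.
Qed.
Lemma arith1 a b k n p m v : a <= m -> p.+1 = m -> m < b.+1 -> p <= v -> k - p <= n.+1 - v -> v < n.+1 -> p < k -> [&& a.-1 <= v, k - b <= n - v & k.-1 <= n].
Proof. move=> *; apply/and3P; split; lia. Qed.

Definition Bad0 k a b n r (I : {set 'I_r}) (v : 'I_n.+1) (c0 : 'I_r) : bool :=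
  [&& c0 \in I, a.-1 <= v, k - b <= n - v & k.-1 <= n].

Lemma occ_split (k r a b n : nat) (I : {set 'I_r}) (phi : cperm k r)
  (x : 'I_n.+1 * 'I_r * cperm n r) (f : {ffun 'I_k -> 'I_n.+1}) :
  inTunion a b I phi -> occurrence phi (Fmap x) f ->
  Bad0 k a b I x.1.1 x.1.2 \/ contains phi x.2.
Proof.
case/existsP => m /andP [Ham /existsP [i0 /and3P [Hi0 Hm HI]]].
move=> Hocc; have := Hocc; case/andP => /andP [Hinc Hord] Hcol.
have Hinc' : forall j j' : 'I_k, j < j' -> f j < f j'.
  by move=> j j' H; move/forallP: Hinc => /(_ j) /forallP /(_ j') /implyP; apply.
have finj : injective f.
  move=> j j' E; case: (ltngtP j j') => [H|H|H]; last exact: val_inj.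
  - by move: (Hinc' _ _ H); rewrite E ltnn.
  - by move: (Hinc' _ _ H); rewrite E ltnn.
have Hord' : forall j j' : 'I_k, ((Fmap x).1 (f j) < (Fmap x).1 (f j')) = (phi.1 j < phi.1 j').
  by move=> j j'; move/forallP: Hord => /(_ j) /forallP /(_ j') /eqP.
have Hcol' : forall j : 'I_k, (Fmap x).2 (f j) = phi.2 j.
  by move=> j; move/forallP: Hcol => /(_ j) /eqP.
have Hmin : forall j : 'I_k, f i0 <= f j.
  move=> j; have : i0 <= j by rewrite (eqP Hi0).
  rewrite leq_eqVlt => /orP [/eqP H|H]; first by rewrite (val_inj H).
  exact: ltnW (Hinc' _ _ H).
have Hm' : (nat_of_ord (phi.1 i0)).+1 = nat_of_ord m by apply/eqP.
have Hmb := ltn_ord m.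
case: (eqVneq (f i0) ord0) => Hf0.
- left.
  have Ev : (Fmap x).1 ord0 = x.1.1 by rewrite /Fmap /= lift_perm_id.
  have Ec : (Fmap x).2 ord0 = x.1.2 by rewrite /Fmap /= ffunE unlift_none.
  have ginj : injective (fun j => (Fmap x).1 (f j)).
    by move=> j j' /perm_inj /finj.
  have Hb := count_below ginj (s := phi.1) (i0 := i0) (fun j => Hord' j i0).
  have Ha := count_above ginj (s := phi.1) (i0 := i0) (fun j => Hord' i0 j).
  rewrite Hf0 Ev in Hb Ha.
  have Hv := ltn_ord x.1.1.
  have Hk := ltn_ord (phi.1 i0).
  rewrite /Bad0 -Ec -Hf0 Hcol' HI /=.
  exact: (arith1 Ham Hm' Hmb Hb Ha Hv Hk).
- right.
  have Hpos : forall j : 'I_k, 0 < f j.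
    move=> j; have := Hmin j; rewrite lt0n in Hf0 *.
    by move: Hf0; case: (f i0) => [[|?] ?] //= _; lia.
  have Hlt : forall j : 'I_k, (f j).-1 < n.
    by move=> j; have := ltn_ord (f j); have := Hpos j; lia.
  apply/existsP; exists [ffun j => Ordinal (Hlt j)].
  rewrite -occ_lift.
  have -> : [ffun j => lift ord0 ([ffun j => Ordinal (Hlt j)] j)] = f.
    apply/ffunP => j; rewrite !ffunE; apply: val_inj => /=; rewrite /bump leq0n add1n.
    exact: prednK (Hpos j).
  exact: Hocc.
Qed.

Lemma occ_build (k r a b n : nat) (I : {set 'I_r}) (x : 'I_n.+1 * 'I_r * cperm n r) :
  1 <= a -> a <= b -> b <= k -> Bad0 k a b I x.1.1 x.1.2 ->
  exists phi : cperm k r, inTunion a b I phi && contains phi (Fmap x).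
Proof.
move=> Ha Hab Hbk /and4P [HI H1 H2 H3].
set p := (Fmap x).1; set col := (Fmap x).2.
have Hp0 : nat_of_ord (p ord0) = x.1.1 by rewrite /p /Fmap /= lift_perm_id.
have Hc0 : col ord0 = x.1.2 by rewrite /col /Fmap /= ffunE unlift_none.
have Hv := ltn_ord x.1.1.
move: (nat_of_ord x.1.1) Hp0 H1 H2 H3 Hv => v Hp0 H1 H2 H3 Hv.
set m := maxn a (k - (n - v)).
have Hm1 : a <= m by apply: leq_maxl.
have Hm2 : m <= b by rewrite geq_max Hab /=; lia.
have Hm3 : m <= v.+1 by rewrite geq_max; apply/andP; split; lia.
have Hm4 : k - m <= n - v by have := leq_maxr a (k - (n - v)); rewrite -/m; lia.
set lo := v.+1 - m.
have Hlok : lo + k <= n.+1 by rewrite /lo; lia.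
set S := [set i : 'I_n.+1 | lo <= p i < lo + k].
have HS : #|S| = k.
  have -> : S = p @^-1: [set y : 'I_n.+1 | lo <= y < lo + k] by apply/setP => i; rewrite !inE.
  by rewrite card_preimset ?card_window //; apply: perm_inj.
pose f (j : 'I_k) : 'I_n.+1 := Order.enum_val (cast_ord (esym HS) j).
have fmono : forall i j : 'I_k, (f i <= f j) = (i <= j).
  move=> i j; rewrite /f.
  exact: (@Order.le_enum_val _ _ (@Order.le_total _ _) (mem S) (cast_ord (esym HS) i) (cast_ord (esym HS) j)).
have finc : forall i j : 'I_k, (f i < f j) = (i < j).
  by move=> i j; rewrite !ltnNge fmono.
have fS : forall j, f j \in S by move=> j; apply: Order.enum_valP.
have fwin : forall j, lo <= p (f j) < lo + k by move=> j; have := fS j; rewrite inE.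
have Hphi : forall j, p (f j) - lo < k by move=> j; have := fwin j; lia.
pose phi1 (j : 'I_k) : 'I_k := Ordinal (Hphi j).
have phi1inj : injective phi1.
  move=> i j /(congr1 val) /= E.
  have E' : p (f i) = p (f j) :> nat by have := fwin i; have := fwin j; lia.
  move/val_inj/perm_inj: E' => /Order.enum_val_inj /(congr1 val) /= E2.
  exact: val_inj.
pose phi : cperm k r := (perm phi1inj, [ffun j => col (f j)]).
have Hk : 0 < k by lia.
pose i0 : 'I_k := Ordinal Hk.
have H0S : ord0 \in S by rewrite inE Hp0 /lo; lia.
have Hfi0 : f i0 = ord0.
  apply/val_inj/eqP; rewrite /= -leqn0.
  have := fmono i0 (cast_ord HS (Order.enum_rank_in H0S ord0)).
  rewrite /f cast_ordK Order.enum_rankK_in // => ->.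
exists phi; apply/andP; split.
- have Hmb : m < b.+1 by [].
  apply/existsP; exists (Ordinal Hmb); rewrite /= Hm1 /=.
  apply/existsP; exists i0; rewrite /=.
  rewrite permE /= Hfi0 Hp0 ffunE Hfi0 Hc0 HI andbT.
  apply/eqP; rewrite /lo; lia.
- apply/existsP; exists [ffun j => f j].
  rewrite /occurrence; apply/andP; split; first (apply/andP; split).
  + by apply/forallP => i; apply/forallP => j; rewrite !ffunE finc; apply/implyP.
  + apply/forallP => i; apply/forallP => j; rewrite !ffunE !(@permE _ phi1) /=.
    have := fwin i; have := fwin j; move=> A B; apply/eqP; change (lift_perm ord0 x.1.1 x.2.1) with p; apply/idP/idP => C; lia.
  + by apply/forallP => j; rewrite !ffunE.
Qed.

Lemma avoid_char (k r a b n : nat) (I : {set 'I_r}) (x : 'I_n.+1 * 'I_r * cperm n r) :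
  1 <= a -> a <= b -> b <= k ->
  (Fmap x \in avoiders n.+1 (@inTunion k r a b I)) =
  (x.2 \in avoiders n (@inTunion k r a b I)) && ~~ Bad0 k a b I x.1.1 x.1.2.
Proof.
move=> Ha Hab Hbk; rewrite !inE; apply/idP/idP.
- move/forallP => H; apply/andP; split.
  + apply/forallP => phi; apply/implyP => Tphi; apply/negP => /existsP [g Hg].
    move: (H phi); rewrite Tphi /= => /negP; apply; apply/existsP.
    by exists [ffun j => lift ord0 (g j)]; rewrite occ_lift.
  + apply/negP => Hbad; have [phi /andP [T1 C1]] := occ_build Ha Hab Hbk Hbad.
    by move: (H phi); rewrite T1 C1.
- case/andP => /forallP H Hb; apply/forallP => phi; apply/implyP => Tphi.
  apply/negP => /existsP [f Hf].
  case: (occ_split Tphi Hf) => [Hbad|C]; first by rewrite Hbad in Hb.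
  by move: (H phi); rewrite Tphi C.
Qed.

Lemma card_step (k r a b n : nat) (I : {set 'I_r}) :
  1 <= a -> a <= b -> b <= k ->
  #|avoiders n.+1 (@inTunion k r a b I)| =
  #|[set vc : 'I_n.+1 * 'I_r | ~~ Bad0 k a b I vc.1 vc.2]| * #|avoiders n (@inTunion k r a b I)|.
Proof.
move=> Ha Hab Hbk.
have -> : avoiders n.+1 (@inTunion k r a b I) =
  (@Fmap n r) @: setX [set vc : 'I_n.+1 * 'I_r | ~~ Bad0 k a b I vc.1 vc.2] (avoiders n (@inTunion k r a b I)).
  apply/setP => psi; have [x ->] := Fmap_onto psi.
  rewrite (mem_imset _ _ (@Fmap_inj n r)) avoid_char //.
  by case: x => [[v c] y]; rewrite in_setX inE /= andbC.
by rewrite (card_imset _ (@Fmap_inj n r)) cardsX.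
Qed.

Definition gf (k r a b d : nat) (j : nat) :=
  if k <= j then d * (k + a - b - 1) + j * (r - d) else r * j.

Lemma card_good (k r a b n : nat) (I : {set 'I_r}) :
  1 <= a -> a <= b -> b <= k -> #|I| <= r ->
  #|[set vc : 'I_n.+1 * 'I_r | ~~ Bad0 k a b I vc.1 vc.2]| = gf k r a b #|I| n.+1.
Proof.
move=> Ha Hab Hbk HIr.
rewrite cardsCs card_prod !card_ord /gf.
have -> : ~: [set vc : 'I_n.+1 * 'I_r | ~~ Bad0 k a b I vc.1 vc.2] =
          [set vc : 'I_n.+1 * 'I_r | Bad0 k a b I vc.1 vc.2].
  by apply/setP => vc; rewrite !inE negbK.
case: (leqP k n.+1) => Hk.
- have -> : [set vc : 'I_n.+1 * 'I_r | Bad0 k a b I vc.1 vc.2] =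
     setX [set v : 'I_n.+1 | a.-1 <= v < a.-1 + (n.+1 - (k - b) - a.-1)] I.
    apply/setP => [[v c]]; rewrite in_setX !inE /Bad0 /=.
    have Hv := ltn_ord v.
    case: (c \in I); rewrite ?andbF //= andbT.
    have -> : (k.-1 <= n) = true by apply/idP; lia.
    rewrite andbT; apply/idP/idP => /andP [H1 H2]; apply/andP; split; lia.
  rewrite cardsX card_window; last by lia.
  set d := #|I|; set L := n.+1 - (k - b) - a.-1.
  have EL : L + (k + a - b - 1) = n.+1 by rewrite /L; lia.
  rewrite -{1 2}EL.
  have E1 : r = d + (r - d) by lia.
  rewrite {1}E1 !mulnDl !mulnDr [d * _]mulnC.
  move: (L * d) (L * (r - d)) ((k + a - b - 1) * d) ((k + a - b - 1) * (r - d)) => X Y Z W; lia.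
- have -> : [set vc : 'I_n.+1 * 'I_r | Bad0 k a b I vc.1 vc.2] = set0.
    apply/setP => [[v c]]; rewrite !inE /Bad0 /=.
    have -> : (k.-1 <= n) = false by apply/negbTE; rewrite -ltnNge; lia.
    by rewrite !andbF.
  by rewrite cards0 subn0 mulnC.
Qed.

Lemma card_base (k r a b : nat) (I : {set 'I_r}) : 1 <= k ->
  #|avoiders 0 (@inTunion k r a b I)| = 1.
Proof.
move=> Hk.
pose psi0 : cperm 0 r := (1%g, ffun0 (card_ord 0)).
have -> : avoiders 0 (@inTunion k r a b I) = [set psi0].
  apply/setP => psi; rewrite !inE.
  have -> : psi == psi0.
    apply/eqP; case: psi => p c; congr pair.
      by apply/permP => i; case: i.
    by apply/ffunP => i; case: i.
  apply/forallP => phi; apply/implyP => _; apply/negP => /existsP [f _].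
  by case: (f (Ordinal Hk)).
by rewrite cards1.
Qed.

Lemma card_all (k r a b : nat) (I : {set 'I_r}) (n : nat) :
  1 <= k -> 1 <= a -> a <= b -> b <= k -> #|I| <= r ->
  #|avoiders n (@inTunion k r a b I)| = \prod_(1 <= j < n.+1) gf k r a b #|I| j.
Proof.
move=> Hk Ha Hab Hbk HIr; elim: n => [|n IH].
  by rewrite card_base // big_geq.
rewrite card_step // card_good // IH [RHS]big_nat_recr //= mulnC.
congr (_ * _); apply: eq_bigr => i _; done.
Qed.

Theorem mainTheorem2 (k r a b d : nat) (I : {set 'I_r}) (n : nat) :
  1 <= k -> 1 <= r -> 1 <= a -> a <= b -> b <= k ->
  1 <= d -> d <= r -> #|I| = d -> k <= n ->
  #|avoiders n (@inTunion k r a b I)| =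
    (k.-1)`! * r ^ k.-1 *
    \prod_(k <= j < n.+1) (d * (k + a - b - 1) + j * (r - d)).
Proof.
move=> Hk Hr Ha Hab Hbk Hd Hdr HI Hkn.
rewrite card_all //; last by rewrite HI.
rewrite HI (@big_cat_nat _ _ _ k) /=; last 2 first; [done | lia |].
congr (_ * _).
- rewrite (@eq_big_nat _ _ _ 1 k _ (fun j => r * j)); last first.
    by move=> j /andP [_ Hj]; rewrite /gf leqNgt Hj.
  rewrite big_split /= prod_nat_const_nat fact_prod mulnC.
  by rewrite prednK // subn1.
- apply: eq_big_nat => j /andP [Hj _]; by rewrite /gf Hj.
Qed.
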